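(* Under the setup below, fix $K=(k_1,\dots,k_r)$. Let $C_K(y)$ be the matrix with rows indexed by multi-indices $\beta\in\mathbb N^r$ of degree $1$ and columns indexed by pairs $(\gamma,L)$, where $\gamma\in\mathbb N^r$ has degree $r-1$ and $L$ ranges over ordered $r$-tuples of distinct elements of $[d]$, with entries $C_K(y)_{\beta,(\gamma,L)}=D_{\beta+\gamma,L}(y)$. Then all $2\times2$ minors of $C_K(y)$ are homogeneous polynomials of degree $2r$ vanishing on the attention variety.
   Context: Setup: $d'=1$, $t>1$, $Q,K\in\mathbb R^{a\times d}$, $V\in\mathbb R^{1\times d}$ with row $v$, $A=K^\top Q$, $\varphi_W(X)=VX(X^\top AX)$, $X=(x_{kn})\in\mathbb R^{d\times t}$; fix $j\in[t]$, $n\ne j$, and $2\le r\le\min(a,d)$; $k_1,\dots,k_r$ are distinct elements of $[d]$. $y_{n,j}(\mathcal A,b)$ denotes the coefficient of $(\prod_{u\in\mathcal A}x_{un})x_{bj}$ in $\varphi_W(X)[1,j]$ divided by the number of distinct orderings of the size-2 multiset $\mathcal A$; $\omega(u,w)=1$ if $u=w$, $2$ otherwise. For $\alpha\in\mathbb N^r$ with $|\alpha|=r$, choose $f:[r]\to[r]$ with $|f^{-1}(m)|=\alpha_m$ whose only directed cycles are fixed points, and for a tuple $L=(l_1,\dots,l_r)$ of distinct indices set $D_{\alpha,L}(y)=\det\big(\omega(k_{f(p)},k_p)\,y_{n,j}(\{k_{f(p)},k_p\},l_q)\big)_{p,q=1}^r$; on $\mu(W)$ this equals $(\prod_m v_{k_m}^{\alpha_m})\det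 A_{K,L}$. $\mu$ maps $W$ to all scaled coefficients; the attention variety is the Zariski closure of $\operatorname{im}\mu$. *)

(* Defs.v *)
From HB Require Import structures.
From mathcomp Require Import all_boot all_order all_algebra.
From mathcomp Require Import mpoly.
Set Implicit Arguments. Unset Strict Implicit. Unset Printing Implicit Defensive.
Import Order.TTheory GRing.Theory Num.Theory.
Local Open Scope ring_scope.

(* Polynomial ring in the entries x_{kn} of X in R^{d x t}; the variable
   x_{kn} is 'X_(mxvec_index k n). *)
Definition Xvar (d t : nat) (k : 'I_d) (n : 'I_t) : 'I_(d * t) := mxvec_index k n.

Definition Xmat (R : comRingType) (d t : nat) : 'M[{mpoly R[d * t]}]_(d, t) :=
  \matrix_(k, n) 'X_(Xvar k n).

Definition attA (R : comRingType) (a d : nat) (Q K : 'M[R]_(a, d)) : 'M[R]_d :=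
  K^T *m Q.

(* phi_W(X) = V X (X^T A X), with d' = 1, as a 1 x t matrix of polynomials in X *)
Definition phiW (R : comRingType) (a d t : nat) (Q K : 'M[R]_(a, d)) (V : 'M[R]_(1, d))
  : 'M[{mpoly R[d * t]}]_(1, t) :=
  (map_mx (fun c => c%:MP) V *m Xmat R d t) *m
  ((Xmat R d t)^T *m map_mx (fun c => c%:MP) (attA Q K) *m Xmat R d t).

(* omega(u,w) = 1 if u = w, 2 otherwise; this is also the number of distinct
   orderings of the size-2 multiset {u,w}. *)
Definition omega (d : nat) (u w : 'I_d) : nat := if u == w then 1%N else 2%N.

Definition mon3 (d t : nat) (n j : 'I_t) (u w b : 'I_d) : 'X_{1..(d * t)} :=
  (U_(Xvar u n) + U_(Xvar w n) + U_(Xvar b j))%MM.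

(* y_{n,j}({u,w}, b) evaluated at mu(W): coefficient of the monomial divided by
   the number of distinct orderings of the multiset {u,w}. *)
Definition yval (R : fieldType) (a d t : nat) (n j : 'I_t)
  (Q K : 'M[R]_(a, d)) (V : 'M[R]_(1, d)) (u w b : 'I_d) : R :=
  (phiW t Q K V 0 j)@_(mon3 n j u w b) / (omega u w)%:R.

(* Coordinate ring of the y_{n,j}-coordinates: one variable for each pair
   (multiset {u,w}, b); the multiset {u,w} is encoded by (min, max).
   Variables with u > w are never used. *)
Definition yvar (d : nat) (u w b : 'I_d) : 'I_(d * d * d) :=
  if (u <= w)%N then mxvec_index (mxvec_index u w) b
  else mxvec_index (mxvec_index w u) b.

(* The point of the y-coordinate space given by mu(W): the variable with index
   yvar u w b (u <= w) gets the value yval u w b. *)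
Definition ypoint (R : fieldType) (a d t : nat) (n j : 'I_t)
  (Q K : 'M[R]_(a, d)) (V : 'M[R]_(1, d)) : 'I_(d * d * d) -> R :=
  fun i => mxvec (\matrix_(uw < d * d, b < d)
                    (mxvec (\matrix_(u < d, w < d) yval n j Q K V u w b)) 0 uw) 0 i.

Definition mdegree (r : nat) (al : {ffun 'I_r -> nat}) : nat := (\sum_(m < r) al m)%N.

Definition maddn (r : nat) (al be : {ffun 'I_r -> nat}) : {ffun 'I_r -> nat} :=
  [ffun m => (al m + be m)%N].

Definition admissible_f (r : nat) (al : {ffun 'I_r -> nat}) (f : 'I_r -> 'I_r) : Prop :=
  (forall m : 'I_r, #|[pred p | f p == m]| = al m) /\
  (forall (p : 'I_r) (k : nat), (0 < k)%N -> iter k f p = p -> f p = p).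

Definition Dpoly (R : comRingType) (d r : nat) (k : 'I_r -> 'I_d) (f : 'I_r -> 'I_r)
  (L : 'I_r -> 'I_d) : {mpoly R[d * d * d]} :=
  \det (\matrix_(p < r, q < r)
          ((omega (k (f p)) (k p))%:R *: 'X_(yvar (k (f p)) (k p) (L q)))).

(* Entry C_K(y)_{beta,(gamma,L)} = D_{beta+gamma,L}(y), where fch alpha is the
   chosen f for alpha. *)
Definition CKentry (R : comRingType) (d r : nat) (k : 'I_r -> 'I_d)
  (fch : {ffun 'I_r -> nat} -> 'I_r -> 'I_r)
  (be ga : {ffun 'I_r -> nat}) (L : {ffun 'I_r -> 'I_d}) : {mpoly R[d * d * d]} :=
  Dpoly R (k) (fch (maddn be ga)) L.

(* Main.v *)
Require Import Defs.
From HB Require Import structures.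
From mathcomp Require Import all_boot all_order all_algebra all_fingroup.
From mathcomp Require Import mpoly.
Import GRing.Theory Num.Theory.
Local Open Scope ring_scope.

Lemma Xvar_eq d t (k k' : 'I_d) (s s' : 'I_t) :
  (Xvar k s == Xvar k' s') = (k == k') && (s == s').
Proof.
apply/eqP/andP => [|[/eqP-> /eqP->]] //.
move=> /cast_ord_inj /enum_rank_inj [-> ->]; by [].
Qed.

Lemma mon_eq d t (n j s : 'I_t) (u w b c p q : 'I_d) : n != j ->
  ((U_(Xvar c s) + U_(Xvar p s) + U_(Xvar q j))%MM == mon3 n j u w b)
  = [&& s == n, q == b & ((c == u) && (p == w)) || ((c == w) && (p == u))].
Proof.
move=> nj; have jn : (j == n) = false by rewrite eq_sym (negbTE nj).
apply/idP/idP; last first.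
  case/and3P=> /eqP-> /eqP-> /orP[/andP[/eqP-> /eqP->]|/andP[/eqP-> /eqP->]];
  by rewrite /mon3 // (addmC U_(Xvar w n)%MM).
move/eqP/mnmP => H.
have H1 := H (Xvar u n); rewrite /mon3 !mnmDE !mnm1E !Xvar_eq !eqxx jn /= in H1.
case: (eqVneq s n) H1 => [?|sn]; last by rewrite !andbF.
subst s => H1 /=.
have H2 := H (Xvar b j); rewrite /mon3 !mnmDE !mnm1E !Xvar_eq !eqxx (negbTE nj) /= !andbF /= in H2.
case: (eqVneq q b) H2 => [?|qb] /= H2; last by move: H2.
subst q.
have H3 := H (Xvar w n); rewrite /mon3 !mnmDE !mnm1E !Xvar_eq !eqxx jn /= !andbT !andbF in H3.
have H4 := H (Xvar c n); rewrite /mon3 !mnmDE !mnm1E !Xvar_eq !eqxx jn /= !andbT !andbF in H4.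
rewrite !andbT !andbF in H1.
case: (eqVneq c u) H1 H3 H4 => [?|cu] H1 H3 H4 /=.
  subst c; move: H3; case: (p == w); case: (u == w) => //.
case: (eqVneq w c) H4 => [?|wc] H4; last by move: H4; case: (p == c).
subst w => /=; move: H1; by case: (p == u).
Qed.

From mathcomp Require Import ring.

Lemma phi_expand (R : comRingType) a d t (Q K : 'M[R]_(a, d)) V (j : 'I_t) :
  phiW t Q K V 0 j = \sum_(s < t) \sum_(c < d) \sum_(q < d) \sum_(p < d)
     (V 0 c * attA Q K p q)%:MP *
     'X_[(U_(Xvar c s) + U_(Xvar p s) + U_(Xvar q j))%MM].
Proof.
rewrite /phiW mxE; apply: eq_bigr => s _; rewrite !mxE big_distrl.
apply: eq_bigr => c _; rewrite !mxE big_distrr; apply: eq_bigr => q _ /=.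
rewrite !mxE big_distrl big_distrr; apply: eq_bigr => p _ /=.
rewrite /Xmat !mxE !mpolyXD mpolyCM. ring.
Qed.

Lemma sum_delta (R : comRingType) m (F : 'I_m -> R) w :
  \sum_(p < m) F p * (p == w)%:R = F w.
Proof.
rewrite (bigD1 w) //= eqxx mulr1 big1 ?addr0 // => p /negbTE ->; by rewrite mulr0.
Qed.

Lemma phi_coef (R : comRingType) a d t (Q K : 'M[R]_(a, d)) V (n j : 'I_t) (u w b : 'I_d) :
  n != j ->
  (phiW t Q K V 0 j)@_(mon3 n j u w b) =
  if u == w then V 0 u * attA Q K u b
  else V 0 u * attA Q K w b + V 0 w * attA Q K u b.
Proof.
move=> nj; rewrite phi_expand raddf_sum /=.
under eq_bigr => s _ do rewrite raddf_sum.
under eq_bigr => s _ do under eq_bigr => c _ do rewrite raddf_sum.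
under eq_bigr => s _ do under eq_bigr => c _ do under eq_bigr => q _ do rewrite raddf_sum.
under eq_bigr => s _ do under eq_bigr => c _ do under eq_bigr => q _ do
  under eq_bigr => p _ do rewrite /= mcoeffCM mcoeffX mon_eq //.
rewrite (bigD1 n) //= [X in _ + X]big1 ?addr0 => [|s sn]; last first.
  rewrite (negbTE sn); apply: big1 => c _; apply: big1 => q _; apply: big1 => p _.
  by rewrite mulr0.
rewrite eqxx exchange_big (bigD1 b) //= [X in _ + X]big1 ?addr0 => [|q qb]; last first.
  rewrite (negbTE qb); apply: big1 => c _; apply: big1 => p _.
  by rewrite mulr0.
rewrite eqxx /=.
case: (eqVneq u w) => [<-|uw].
  rewrite (bigD1 u) //= [X in _ + X]big1 ?addr0 => [|c cu]; last first.
    rewrite (negbTE cu) /=; apply: big1 => p _; by rewrite mulr0.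
  rewrite eqxx /= (bigD1 u) //= [X in _ + X]big1 ?addr0 => [|p pu]; last first.
    by rewrite (negbTE pu) mulr0.
  by rewrite eqxx mulr1.
rewrite (bigD1 u) //= [X in _ + X](bigD1 w) /=; last by rewrite eq_sym.
rewrite [X in _ + (_ + X)]big1 ?addr0 => [|c /andP[cw cu]]; last first.
  rewrite (negbTE cu) (negbTE cw) /=; apply: big1 => p _; by rewrite mulr0.
rewrite eqxx (negbTE uw) (eq_sym w u) (negbTE uw) /=.
under eq_bigr => p _ do rewrite orbF.
under [X in _ + X]eq_bigr => p _ do rewrite eqxx /=.
by rewrite !sum_delta.
Qed.
Lemma perm_acyc r (f : 'I_r -> 'I_r) (s : 'S_r) :
  (forall (p : 'I_r) (k : nat), (0 < k)%N -> iter k f p = p -> f p = p) ->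
  (forall p, (s p == p) || (s p == f p)) -> s = 1%g.
Proof.
move=> hf H; apply/permP => p; rewrite perm1.
apply/eqP; apply/negPn/negP => sp.
have it : forall i, iter i s p = iter i f p.
  elim=> [//|i IH]; rewrite !iterS -IH.
  have : s (iter i s p) != iter i s p.
    apply/negP => /eqP E; move/negP: sp; apply; apply/eqP.
    apply: (perm_inj (s := (s ^+ i)%g)); rewrite !permX -iterSr /=.
    exact: E.
  by case/orP: (H (iter i s p)) => /eqP -> //; rewrite eqxx.
have := hf p #[s]%g (order_gt0 _); rewrite -it -permX expg_order perm1.
move=> /(_ erefl) fp.
by case/orP: (H p); rewrite ?fp (negbTE sp).
Qed.

Lemma det_acyc (R : comRingType) r (f : 'I_r -> 'I_r) (al be : 'I_r -> R) (N : 'M[R]_r) :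
  (forall (p : 'I_r) (k : nat), (0 < k)%N -> iter k f p = p -> f p = p) ->
  \det (\matrix_(p, q) (al p * N p q + (if f p == p then 0 else be p * N (f p) q)))
  = (\prod_p al p) * \det N.
Proof.
move=> hf.
pose T := \matrix_(p, p') (al p * (p' == p)%:R +
               (if f p == p then 0 else be p * (p' == f p)%:R)) : 'M[R]_r.
have -> : \matrix_(p, q) (al p * N p q + (if f p == p then 0 else be p * N (f p) q))
          = T *m N.
  apply/matrixP => p q; rewrite !mxE.
  under eq_bigr => p' _ do rewrite mxE mulrDl.
  rewrite big_split /=.
  rewrite (bigD1 p) //= eqxx mulr1 big1 ?addr0; last first.
    by move=> i /negbTE ->; rewrite mulr0 mul0r.
  congr (_ + _); case: (f p == p).
    by rewrite big1 // => i _; rewrite mul0r.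
  rewrite (bigD1 (f p)) //= eqxx mulr1 big1 ?addr0 //.
  by move=> i /negbTE ->; rewrite mulr0 mul0r.
rewrite det_mulmx; congr (_ * _).
rewrite /determinant (bigD1 1%g) //= [X in _ + X]big1 ?addr0.
  rewrite odd_perm1 expr0 mul1r; apply: eq_bigr => p _.
  rewrite perm1 mxE eqxx mulr1; case: eqP => [_|fp]; first by rewrite addr0.
  rewrite (_ : (p == f p) = false) ?mulr0 ?addr0 //.
  by apply/negbTE/eqP => E; apply: fp; rewrite -E.
move=> s s1.
case: (pickP (fun p => ~~ ((s p == p) || (s p == f p)))) => [p Hp|Hn]; last first.
  have : s = 1%g.
    by apply: (@perm_acyc r f s hf) => p; apply/negPn; rewrite Hn.
  by move=> E; move: s1; rewrite E eqxx.
rewrite (bigD1 p) //= mxE.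
move: Hp; rewrite negb_or => /andP[/negbTE -> /negbTE ->].
by rewrite mulr0 add0r; case: ifP; rewrite ?mulr0 mul0r mulr0.
Qed.

Lemma omega_sym d (u w : 'I_d) : omega u w = omega w u.
Proof. by rewrite /omega eq_sym. Qed.

Lemma yval_sym (R : fieldType) a d t (n j : 'I_t) (Q K : 'M[R]_(a, d)) V (u w b : 'I_d) :
  yval n j Q K V u w b = yval n j Q K V w u b.
Proof. by rewrite /yval /mon3 omega_sym (addmC U_(Xvar u n)%MM). Qed.

Lemma ypoint_yvar (R : fieldType) a d t (n j : 'I_t) (Q K : 'M[R]_(a, d)) V (u w b : 'I_d) :
  ypoint n j Q K V (yvar u w b) = yval n j Q K V u w b.
Proof.
rewrite /ypoint /yvar; case: ifP => _; rewrite mxvecE mxE mxvecE mxE //.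
by rewrite yval_sym.
Qed.

Lemma yval_omega (R : numFieldType) a d t (n j : 'I_t) (Q K : 'M[R]_(a, d)) V (u w b : 'I_d) :
  n != j ->
  (omega u w)%:R * yval n j Q K V u w b =
  if u == w then V 0 u * attA Q K u b
  else V 0 u * attA Q K w b + V 0 w * attA Q K u b.
Proof.
move=> nj; rewrite /yval mulrC divfK ?phi_coef //.
by rewrite pnatr_eq0 /omega; case: (u == w).
Qed.

Lemma Deval (R : numFieldType) a d t r (n j : 'I_t) (Q K : 'M[R]_(a, d)) V
   (k : 'I_r -> 'I_d) (f : 'I_r -> 'I_r) (L : 'I_r -> 'I_d) :
  n != j -> injective k ->
  (forall (p : 'I_r) (m : nat), (0 < m)%N -> iter m f p = p -> f p = p) ->
  (Dpoly R k f L).@[ypoint n j Q K V] =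
  (\prod_p V 0 (k (f p))) * \det (\matrix_(p, q) attA Q K (k p) (L q)).
Proof.
move=> nj kinj hf; rewrite /Dpoly -det_map_mx.
rewrite -(@det_acyc _ _ f (fun p => V 0 (k (f p))) (fun p => V 0 (k p)) _ hf); congr (\det _).
apply/matrixP => p q; rewrite [LHS]mxE /= [in LHS]mxE mevalZ mevalXU ypoint_yvar yval_omega //.
rewrite (inj_eq kinj); case: eqP => [fp|nfp]; first by rewrite !mxE fp eqxx addr0.
by rewrite !mxE (introF eqP nfp).
Qed.

Lemma prod_fibre (R : comRingType) r (al : {ffun 'I_r -> nat}) (f : 'I_r -> 'I_r) (g : 'I_r -> R) :
  (forall m, #|[pred p | f p == m]| = al m) -> \prod_p g (f p) = \prod_m g m ^+ al m.
Proof.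
move=> Hal; rewrite (partition_big f xpredT) //=; apply: eq_bigr => m _.
rewrite (eq_bigr (fun _ => g m)) => [|p /eqP -> //].
rewrite -Hal -prodr_const.
by apply: eq_bigl => p; rewrite inE.
Qed.

Lemma prod_maddn (R : comRingType) r (be ga : {ffun 'I_r -> nat}) (g : 'I_r -> R) :
  \prod_m g m ^+ maddn be ga m = (\prod_m g m ^+ be m) * \prod_m g m ^+ ga m.
Proof. by rewrite -big_split; apply: eq_bigr => m _; rewrite ffunE exprD. Qed.

Lemma mdegree_maddn r (be ga : {ffun 'I_r -> nat}) :
  mdegree (maddn be ga) = (mdegree be + mdegree ga)%N.
Proof. by rewrite /mdegree -big_split; apply: eq_bigr => m _; rewrite ffunE. Qed.

Lemma prod_homog (R : comRingType) N (I : eqType) (s : seq I) (F : I -> {mpoly R[N]}) :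
  (forall i, F i \is 1.-homog) -> \prod_(i <- s) F i \is (size s).-homog.
Proof.
move=> H; elim: s => [|x s IH]; first by rewrite big_nil dhomog1.
by rewrite big_cons /= -add1n; apply: dhomogM.
Qed.

Lemma Dpoly_homog (R : comRingType) d r (k : 'I_r -> 'I_d) f L :
  Dpoly R k f L \is r.-homog.
Proof.
rewrite /Dpoly /determinant; apply: rpred_sum => s _.
set P := \prod_(i < r) _.
suff : (-1) ^+ s * P \is (0 + r)%N.-homog by rewrite add0n.
apply: dhomogM.
  have := @dhomogMn _ _ mdeg 0 (-1) s; rewrite mul0n; apply.
  by rewrite dhomogN dhomog1.
have := @prod_homog R _ _ (index_enum 'I_r) (fun i =>
  (\matrix_(p, q) ((omega (k (f p)) (k p))%:R *: 'X_(yvar (k (f p)) (k p) (L q))))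
  i (s i)).
have -> : size (index_enum 'I_r) = r by rewrite [index_enum _]unlock -enumT size_enum_ord.
 apply => i; rewrite mxE; apply: dhomogZ.
by rewrite dhomogE msuppX /= mdeg1.
Qed.

Lemma meval_minor (R : comRingType) N (v : 'I_N -> R) (x y z w : {mpoly R[N]}) :
  (x * y - z * w).@[v] = x.@[v] * y.@[v] - z.@[v] * w.@[v].
Proof. by rewrite mevalB !mevalM. Qed.

Theorem mainTheorem14 (R : realFieldType) (a d t r : nat) (j n : 'I_t)
  (k : 'I_r -> 'I_d)
  (fch : {ffun 'I_r -> nat} -> 'I_r -> 'I_r) :
  (1 < t)%N -> n != j -> (2 <= r)%N -> (r <= minn a d)%N ->
  injective k ->
  (forall al : {ffun 'I_r -> nat}, mdegree al = r -> admissible_f al (fch al)) ->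
  forall (be1 be2 ga1 ga2 : {ffun 'I_r -> nat}) (L1 L2 : {ffun 'I_r -> 'I_d}),
    mdegree be1 = 1%N -> mdegree be2 = 1%N -> be1 != be2 ->
    mdegree ga1 = r.-1 -> mdegree ga2 = r.-1 ->
    injectiveb L1 -> injectiveb L2 -> (ga1, L1) != (ga2, L2) ->
    let minor : {mpoly R[d * d * d]} :=
      CKentry R k fch be1 ga1 L1 * CKentry R k fch be2 ga2 L2
      - CKentry R k fch be1 ga2 L2 * CKentry R k fch be2 ga1 L1 in
    minor \is (2 * r)%N.-homog /\
    (forall (Q K : 'M[R]_(a, d)) (V : 'M[R]_(1, d)),
        minor.@[ypoint n j Q K V] = 0).
Proof.
move=> _ nj r2 _ kinj Hadm be1 be2 ga1 ga2 L1 L2 hb1 hb2 _ hg1 hg2 _ _ _ minor.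
split.
  rewrite /minor /CKentry mul2n -addnn.
  by apply: rpredB; apply: dhomogM; apply: Dpoly_homog.
move=> Q K V.
have adm : forall be ga, mdegree be = 1%N -> mdegree ga = r.-1 ->
    admissible_f (maddn be ga) (fch (maddn be ga)).
  move=> be ga hb hg; apply: Hadm; rewrite mdegree_maddn hb hg add1n prednK //.
  exact: ltnW.
pose Pw (be : {ffun 'I_r -> nat}) := \prod_m V 0 (k m) ^+ be m.
have PD : forall be ga, mdegree be = 1%N -> mdegree ga = r.-1 ->
    \prod_p V 0 (k (fch (maddn be ga) p)) = Pw be * Pw ga.
  move=> be ga hb hg; have [h1 _] := adm _ _ hb hg.
  by rewrite (@prod_fibre _ _ _ _ (fun m => V 0 (k m)) h1) prod_maddn.
rewrite /minor meval_minor /CKentry.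
rewrite (@Deval _ _ _ _ _ _ _ _ _ _ _ _ L1 nj kinj (adm _ _ hb1 hg1).2).
rewrite (@Deval _ _ _ _ _ _ _ _ _ _ _ _ L2 nj kinj (adm _ _ hb2 hg2).2).
rewrite (@Deval _ _ _ _ _ _ _ _ _ _ _ _ L2 nj kinj (adm _ _ hb1 hg2).2).
rewrite (@Deval _ _ _ _ _ _ _ _ _ _ _ _ L1 nj kinj (adm _ _ hb2 hg1).2).
rewrite !PD //.
move: (\det _) (\det _) (Pw be1) (Pw be2) (Pw ga1) (Pw ga2) => x y z1 z2 z3 z4.
ring.
Qed.
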